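(* Let $\lambda$ be a regular uncountable cardinal, $\kappa<\lambda$, and $\mathcal{C}=\langle\mathcal{C}_\alpha\mid\alpha<\lambda\rangle$ a coherent sequence of length $\lambda$ and width $<\kappa$. Suppose there is an unbounded $A\subseteq\lambda$ such that for every $\alpha\in A$ there is $C\in\mathcal{C}_\alpha$ with $A\cap\alpha\subseteq C$. Then $\mathcal{C}$ has a thread.
   Context: For a set of ordinals $A$, $\mathrm{acc}(A)$ is the set of $\beta<\sup\{\alpha+1\mid\alpha\in A\}$ with $\beta=\sup(A\cap\beta)$. A coherent sequence of length $\lambda$ and width $<\eta$ is $\mathcal{C}=\langle\mathcal{C}_\alpha\mid\alpha<\lambda\rangle$ where each $\mathcal{C}_\alpha$ is a nonempty set of fewer than $\eta$ closed unbounded subsets of $\alpha$ (for successor $\alpha=\beta+1$, $\mathcal{C}_\alpha=\{\{\beta\}\}$), such that for all $\beta<\lambda$, $C\in\mathcal{C}_\beta$ and $\alpha\in\mathrm{acc}(C)$, $C\cap\alpha\in\mathcal{C}_\alpha$. A thread through $\mathcal{C}$ is a club $D\subseteq\lambda$ with $D\cap\alpha\in\mathcal{C}_\alpha$ for all $\alpha\in\mathrm{acc}(D)$. *)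

(* Defs.v *)
(* Ordinals below a cardinal lambda are modelled by a type T
   carrying a strict well-order [lt]; subsets are predicates T -> Prop;
   cardinalities are compared via injections. *)
From Stdlib Require Import Classical.

Section Defs.
Context {T : Type} (lt : T -> T -> Prop).

Definition le (x y : T) : Prop := lt x y \/ x = y.

Definition strict_well_order : Prop :=
  (forall x, ~ lt x x) /\
  (forall x y z, lt x y -> lt y z -> lt x z) /\
  (forall x y, lt x y \/ x = y \/ lt y x) /\
  well_founded lt.

Definition is_succ (beta alpha : T) : Prop :=
  lt beta alpha /\ forall g, lt beta g -> le alpha g.

Definition limit_point (X : T -> Prop) (beta : T) : Prop :=
  (exists g, lt g beta) /\
  forall g, lt g beta -> exists a, X a /\ lt g a /\ lt a beta.

(* acc(X) exactly as in the paper: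
   beta < sup{a+1 | a ∈ X}  and  beta = sup (X ∩ beta) *)
Definition acc (X : T -> Prop) (beta : T) : Prop :=
  (exists a, X a /\ le beta a) /\
  forall g, lt g beta -> exists a, X a /\ lt g a /\ lt a beta.

Definition club_in (alpha : T) (C : T -> Prop) : Prop :=
  (forall x, C x -> lt x alpha) /\
  (forall g, lt g alpha -> exists c, C c /\ le g c) /\
  (forall b, lt b alpha -> limit_point C b -> C b).

Definition club (D : T -> Prop) : Prop :=
  (forall g, exists d, D d /\ le g d) /\
  (forall b, limit_point D b -> D b).

Definition restrict (X : T -> Prop) (alpha : T) : T -> Prop :=
  fun x => X x /\ lt x alpha.

End Defs.

Definition card_lt (X Y : Type) : Prop :=
  (exists f : X -> Y, forall a b, f a = f b -> a = b) /\
  ~ (exists g : Y -> X, forall a b, g a = g b -> a = b).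

Definition regular_uncountable_cardinal {T : Type} (lt : T -> T -> Prop) : Prop :=
  strict_well_order lt /\
  (forall alpha : T, card_lt {b : T | lt b alpha} T) /\
  (forall A : T -> Prop, card_lt {a : T | A a} T ->
     exists b, forall a, A a -> lt a b) /\
  ~ (exists f : T -> nat, forall a b, f a = f b -> a = b).

(* coherent sequence of length lambda and width < kappa (kappa given by a type K) *)
Definition coherent_seq {T : Type} (lt : T -> T -> Prop) (K : Type)
  (Cs : T -> (T -> Prop) -> Prop) : Prop :=
  (forall alpha, exists C, Cs alpha C) /\
  (forall alpha C, Cs alpha C -> club_in lt alpha C) /\
  (forall alpha, card_lt {C : T -> Prop | Cs alpha C} K) /\
  (forall beta alpha, is_succ lt beta alpha ->
     forall C, Cs alpha C <-> (forall x, C x <-> x = beta)) /\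
  (forall beta C alpha, Cs beta C -> acc lt C alpha ->
     Cs alpha (restrict lt C alpha)).

Definition thread {T : Type} (lt : T -> T -> Prop)
  (Cs : T -> (T -> Prop) -> Prop) (D : T -> Prop) : Prop :=
  club lt D /\ forall alpha, acc lt D alpha -> Cs alpha (restrict lt D alpha).

(* Main.v *)
Require Import Defs.
From Stdlib Require Import Classical ClassicalEpsilon FunctionalExtensionality PropExtensionality ProofIrrelevance Lia.

Definition inj {X Y : Type} (P : X -> Prop) (Q : Y -> Prop) : Prop :=
  exists f : X -> Y, (forall x, P x -> Q (f x)) /\
    (forall x y, P x -> P y -> f x = f y -> x = y).

Lemma inj_trans {X Y Z : Type} (P : X -> Prop) (Q : Y -> Prop) (R : Z -> Prop) :
  inj P Q -> inj Q R -> inj P R.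
Proof.
  intros [f [Hf1 Hf2]] [g [Hg1 Hg2]]. exists (fun x => g (f x)). split.
  - intros; auto.
  - intros x y Hx Hy E. apply Hf2; auto.
Qed.

Lemma inj_sub {X Y : Type} (P P' : X -> Prop) (Q : Y -> Prop) :
  (forall x, P x -> P' x) -> inj P' Q -> inj P Q.
Proof.
  intros H [f [H1 H2]]. exists f. split; auto.
Qed.

Lemma inj_refl {X : Type} (P : X -> Prop) : inj P P.
Proof. exists (fun x => x). split; auto. Qed.

Lemma inj_cod {X Y : Type} (P : X -> Prop) (Q Q' : Y -> Prop) :
  (forall y, Q y -> Q' y) -> inj P Q -> inj P Q'.
Proof.
  intros H [f [H1 H2]]. exists f. split; auto.
Qed.

Lemma choice_on {X Y : Type} (y0 : Y) (P : X -> Prop) (R : X -> Y -> Prop) :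
  (forall x, P x -> exists y, R x y) -> exists f : X -> Y, forall x, P x -> R x (f x).
Proof.
  intros H.
  assert (H' : forall x, exists y, P x -> R x y).
  { intros x. destruct (classic (P x)) as [Hp|Hn].
    - destruct (H x Hp) as [y Hy]. exists y; auto.
    - exists y0. intros; contradiction. }
  exists (fun x => proj1_sig (constructive_indefinite_description _ (H' x))).
  intros x Hx. exact (proj2_sig (constructive_indefinite_description _ (H' x)) Hx).
Qed.

Lemma inj_of_surj {X Y : Type} (P : X -> Prop) (Q : Y -> Prop) (f : X -> Y) :
  (exists x0, P x0) ->
  (forall y, Q y -> exists x, P x /\ f x = y) -> inj Q P.
Proof.
  intros [x0 Hx0] H.
  destruct (choice_on x0 Q (fun y x => P x /\ f x = y) H) as [g Hg].
  exists g. split.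
  - intros y Hy. apply (Hg y Hy).
  - intros y y' Hy Hy' E. destruct (Hg y Hy) as [_ E1]. destruct (Hg y' Hy') as [_ E2].
    rewrite <- E1, <- E2, E. reflexivity.
Qed.

Definition prodP {X Y : Type} (P : X -> Prop) (Q : Y -> Prop) : X * Y -> Prop :=
  fun p => P (fst p) /\ Q (snd p).

Lemma inj_prod {X Y X' Y' : Type} (P : X -> Prop) (Q : Y -> Prop) (P' : X' -> Prop) (Q' : Y' -> Prop) :
  inj P P' -> inj Q Q' -> inj (prodP P Q) (prodP P' Q').
Proof.
  intros [f [Hf1 Hf2]] [g [Hg1 Hg2]].
  exists (fun p => (f (fst p), g (snd p))). split.
  - intros [a b] [Ha Hb]; split; simpl in *; auto.
  - intros [a b] [c d] [Ha Hb] [Hc Hd] E. simpl in *. injection E; intros E2 E1.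
    f_equal; auto.
Qed.
Section Ord.
Variable T : Type.
Variable lt : T -> T -> Prop.
Hypothesis WO : strict_well_order lt.

Notation le := (Defs.le lt).

Lemma irr x : ~ lt x x. Proof. apply WO. Qed.
Lemma trans x y z : lt x y -> lt y z -> lt x z. Proof. apply WO. Qed.
Lemma trich x y : lt x y \/ x = y \/ lt y x. Proof. apply WO. Qed.
Lemma wf : well_founded lt. Proof. apply WO. Qed.

Lemma le_refl x : le x x. Proof. unfold Defs.le. right; reflexivity. Qed.
Lemma le_trans x y z : le x y -> le y z -> le x z.
Proof. unfold Defs.le. intros [H|H] [H'|H']; subst; [left; eauto using trans | left; auto | left; auto | right; auto]. Qed.
Lemma lt_le_trans x y z : lt x y -> le y z -> lt x z.
Proof. unfold Defs.le. intros H [H'|H']; subst; eauto using trans. Qed.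
Lemma le_lt_trans x y z : le x y -> lt y z -> lt x z.
Proof. unfold Defs.le. intros [H|H] H'; subst; eauto using trans. Qed.
Lemma not_lt_le x y : ~ lt x y -> le y x.
Proof. unfold Defs.le. intros H. destruct (trich x y) as [h|[h|h]]; [contradiction| right; auto | left; auto]. Qed.
Lemma le_not_lt x y : le x y -> ~ lt y x.
Proof. unfold Defs.le. intros [H|H] H'; subst; [apply (irr x); eauto using trans | apply (irr y); auto]. Qed.
Lemma lt_le x y : lt x y -> le x y. Proof. unfold Defs.le. intros; left; auto. Qed.
Lemma lt_asym x y : lt x y -> ~ lt y x.
Proof. intros H H'. apply (irr x). eauto using trans. Qed.
Lemma le_antisym x y : le x y -> le y x -> x = y.
Proof. unfold Defs.le. intros [H|H] [H'|H']; auto. exfalso; eapply lt_asym; eauto. Qed.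

Lemma min_ex (P : T -> Prop) : (exists x, P x) -> exists m, P m /\ forall y, P y -> le m y.
Proof.
  intros [x Hx]. revert Hx. induction x as [x IH] using (well_founded_induction wf).
  intros Hx. destruct (classic (exists y, P y /\ lt y x)) as [[y [Hy Hyx]]|Hn].
  - apply (IH y Hyx Hy).
  - exists x. split; auto. intros y Hy. apply not_lt_le. intros Hyx. apply Hn. eauto.
Qed.

Lemma sup_ex (P : T -> Prop) : (exists b, forall x, P x -> le x b) ->
  exists s, (forall x, P x -> le x s) /\ (forall b, (forall x, P x -> le x b) -> le s b).
Proof.
  intros H. destruct (min_ex _ H) as [s [Hs Hmin]]. exists s; split; auto.
Qed.



Definition seg (a : T) : T -> Prop := fun x => lt x a.
Definition Inf {X : Type} (P : X -> Prop) : Prop := inj (fun _ : nat => True) P.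

Lemma Inf_inj {X Y : Type} (P : X -> Prop) (Q : Y -> Prop) : Inf P -> inj P Q -> Inf Q.
Proof. intros. eapply inj_trans; eauto. Qed.

Lemma strict_incr_inj (e : nat -> nat) : (forall k, e k < e (S k)) ->
  forall i j, e i = e j -> i = j.
Proof.
  intros H.
  assert (M : forall i d, e i < e (S d + i)).
  { intros i d. induction d as [|d IH]; simpl; [apply H|]. eapply PeanoNat.Nat.lt_trans; [apply IH| apply H]. }
  intros i j E. destruct (PeanoNat.Nat.lt_trichotomy i j) as [h|[h|h]]; auto.
  - exfalso. specialize (M i (j - S i)). replace (S (j - S i) + i) with j in M by lia. rewrite E in M. apply (PeanoNat.Nat.lt_irrefl _ M).
  - exfalso. specialize (M j (i - S j)). replace (S (i - S j) + j) with i in M by lia. rewrite E in M. apply (PeanoNat.Nat.lt_irrefl _ M).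
Qed.

Lemma Union2 {X : Type} (P Q : X -> Prop) : Inf (fun x => P x \/ Q x) -> Inf P \/ Inf Q.
Proof.
  intros [s [Hs1 Hs2]].
  destruct (classic (forall N, exists n, N <= n /\ P (s n))) as [H|H].
  - left. destruct (choice_on 0 (fun _ : nat => True) (fun N n => N <= n /\ P (s n)) (fun N _ => H N)) as [nx Hnx].
    set (e := fix e k := match k with 0 => nx 0 | S k => nx (S (e k)) end).
    assert (He : forall k, e k < e (S k)).
    { intros k. simpl. destruct (Hnx (S (e k)) I) as [h _]. exact h. }
    exists (fun k => s (e k)). split.
    + intros k _. destruct k; simpl; apply (Hnx _ I).
    + intros i j _ _ E. apply Hs2 in E; auto. apply (strict_incr_inj e He); auto.
  - right. apply not_all_ex_not in H. destruct H as [N HN].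
    exists (fun k => s (N + k)). split.
    + intros k _. destruct (Hs1 (N + k) I) as [h|h]; auto. exfalso. apply HN. exists (N + k). split; auto. apply PeanoNat.Nat.le_add_r.
    + intros i j _ _ E. apply Hs2 in E; auto. eapply PeanoNat.Nat.add_cancel_l; eauto.
Qed.

Lemma Single_fin {X : Type} (a : X) : ~ Inf (fun x => x = a).
Proof.
  intros [s [Hs1 Hs2]]. assert (0 = 1).
  { apply Hs2; auto. rewrite (Hs1 0 I), (Hs1 1 I). reflexivity. }
  discriminate.
Qed.

Lemma Inf_mono {X : Type} (P P' : X -> Prop) : (forall x, P x -> P' x) -> Inf P -> Inf P'.
Proof. intros H I. eapply Inf_inj; eauto. exists (fun x => x); split; auto. Qed.

Lemma seg_succ m v : is_succ lt m v -> forall x, lt x v <-> (lt x m \/ x = m).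
Proof.
  intros [Hmv Hs] x. split.
  - intros Hx. destruct (trich x m) as [h|[h|h]]; auto. exfalso.
    apply (le_not_lt _ _ (Hs x h) Hx).
  - intros [h|h]; subst; eauto using trans.
Qed.

Lemma unhotel m v : is_succ lt m v -> Inf (seg v) -> Inf (seg m).
Proof.
  intros Hs HI. assert (HI' : Inf (fun x => lt x m \/ x = m)).
  { eapply Inf_mono; [|exact HI]. intros x Hx. apply (seg_succ m v Hs x). exact Hx. }
  destruct (Union2 _ _ HI') as [h|h]; auto. exfalso; apply (Single_fin m h).
Qed.

Lemma hotel m v : is_succ lt m v -> Inf (seg m) -> inj (seg v) (seg m).
Proof.
  intros Hs [e [He1 He2]].
  pose (idx := fun x => epsilon (inhabits 0) (fun n => e n = x)).
  pose (f := fun x => if excluded_middle_informative (x = m) then e 0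
                      else if excluded_middle_informative (exists n, e n = x) then e (S (idx x)) else x).
  assert (Hidx : forall x, (exists n, e n = x) -> e (idx x) = x).
  { intros x Hx. unfold idx. apply (epsilon_spec (inhabits 0) (fun n => e n = x) Hx). }
  exists f. split.
  - intros x Hx. unfold seg in *. apply (seg_succ m v Hs) in Hx. unfold f.
    destruct (excluded_middle_informative (x = m)); [apply He1; auto|].
    destruct (excluded_middle_informative (exists n, e n = x)); [apply He1; auto|].
    destruct Hx; [auto|contradiction].
  - intros x y Hx Hy. unfold f.
    destruct (excluded_middle_informative (x = m)) as [Exm|Nxm];
    destruct (excluded_middle_informative (y = m)) as [Eym|Nym]; try congruence.
    + destruct (excluded_middle_informative (exists n, e n = y)) as [Ey|Ny].
      * intros E. apply He2 in E; auto. discriminate.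
      * intros E. exfalso. apply Ny. exists 0; auto.
    + destruct (excluded_middle_informative (exists n, e n = x)) as [Ex|Nx].
      * intros E. apply He2 in E; auto. discriminate.
      * intros E. exfalso. apply Nx. exists 0; auto.
    + destruct (excluded_middle_informative (exists n, e n = x)) as [Ex|Nx];
      destruct (excluded_middle_informative (exists n, e n = y)) as [Ey|Ny].
      * intros E. apply He2 in E; auto. injection E. intros E'.
        rewrite <- (Hidx x Ex), <- (Hidx y Ey), E'. reflexivity.
      * intros E. exfalso. apply Ny. eauto.
      * intros E. exfalso. apply Nx. eauto.
      * auto.
Qed.

Lemma fin_max (P : T -> Prop) : ~ Inf P -> (exists x, P x) -> exists m, P m /\ forall x, P x -> le x m.
Proof.
  intros HF [x0 Hx0]. apply NNPP. intros Hn.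
  assert (H : forall m, P m -> exists x, P x /\ lt m x).
  { intros m Hm. apply NNPP. intros Hn2. apply Hn. exists m. split; auto.
    intros x Hx. apply not_lt_le. intros h. apply Hn2. eauto. }
  destruct (choice_on x0 P (fun m x => P x /\ lt m x) H) as [nx Hnx].
  set (s := fix s n := match n with 0 => x0 | S n => nx (s n) end).
  assert (HP : forall n, P (s n)). { induction n; simpl; auto. apply Hnx; auto. }
  assert (Hl : forall n, lt (s n) (s (S n))). { intros n. simpl. apply Hnx; auto. }
  assert (Hm : forall i d, lt (s i) (s (S d + i))).
  { intros i d. induction d as [|d IH]; simpl; [apply Hl|]. eapply trans; [apply IH|]. apply (Hl (S (d + i))). }
  apply HF. exists s. split; auto.
  intros i j _ _ E. destruct (PeanoNat.Nat.lt_trichotomy i j) as [h|[h|h]]; auto.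
  - exfalso. specialize (Hm i (j - S i)). replace (S (j - S i) + i) with j in Hm by lia. rewrite E in Hm. apply (irr _ Hm).
  - exfalso. specialize (Hm j (i - S j)). replace (S (i - S j) + j) with i in Hm by lia. rewrite E in Hm. apply (irr _ Hm).
Qed.

Lemma fin_sq_aux : forall b (P : T -> Prop), (forall x, P x -> lt x b) -> ~ Inf P -> ~ Inf (prodP P P).
Proof.
  intros b. induction b as [b IH] using (well_founded_induction wf).
  intros P Hb HF HI.
  destruct (classic (exists x, P x)) as [Hne|He].
  2:{ destruct HI as [s [Hs _]]. apply He. exists (fst (s 0)). apply (Hs 0 I). }
  destruct (fin_max P HF Hne) as [m [Hm Hmax]].
  set (P' := fun x => P x /\ lt x m).
  assert (HF' : ~ Inf P'). { intros h. apply HF. eapply Inf_mono; [|exact h]. intros x [hx _]; auto. }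
  assert (IH' := IH m (Hb m Hm) P' (fun x hx => proj2 hx) HF').
  assert (Hcov : forall p, prodP P P p -> (prodP P' P' p \/ (P (snd p) /\ fst p = m)) \/ (P (fst p) /\ snd p = m)).
  { intros [a c] [Ha Hc]; simpl in *. unfold prodP, P'; simpl.
    destruct (Hmax a Ha) as [h1|h1]; destruct (Hmax c Hc) as [h2|h2]; subst; auto. }
  assert (HI2 := Inf_mono _ _ Hcov HI).
  destruct (Union2 _ _ HI2) as [h|h].
  - destruct (Union2 _ _ h) as [h'|h']; [contradiction|].
    apply HF. eapply Inf_inj; [exact h'|]. exists snd. split; [intros p [hp _]; auto|].
    intros [a1 c1] [a2 c2] [_ e1] [_ e2] E; simpl in *; subst; reflexivity.
  - apply HF. eapply Inf_inj; [exact h|]. exists fst. split; [intros p [hp _]; auto|].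
    intros [a1 c1] [a2 c2] [_ e1] [_ e2] E; simpl in *; subst; reflexivity.
Qed.

Lemma fin_sq (P : T -> Prop) b : (forall x, P x -> lt x b) -> Inf (prodP P P) -> Inf P.
Proof. intros Hb HI. apply NNPP. intros HF. exact (fin_sq_aux b P Hb HF HI). Qed.

Section Coll.
Variable Q : Type.
Variable R : Q -> Q -> Prop.
Hypothesis Rwf : well_founded R.
Hypothesis Rtr : forall a b c, R a b -> R b c -> R a c.
Variable t0 : T.

Definition collF (p : Q) (rec : forall q, R q p -> T) : T :=
  epsilon (inhabits t0) (fun o => (~ exists q (H : R q p), rec q H = o) /\
     forall o', (~ exists q (H : R q p), rec q H = o') -> le o o').

Definition coll : Q -> T := Fix Rwf (fun _ => T) collF.

Lemma coll_eq p : coll p = collF p (fun q _ => coll q).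
Proof.
  unfold coll. apply (Fix_eq Rwf (fun _ => T) collF). intros x f g H.
  assert (f = g). { apply functional_extensionality_dep; intros y. apply functional_extensionality_dep; intros h. apply H. }
  subst; reflexivity.
Qed.

Definition ImP (p : Q) (o : T) : Prop := exists q, R q p /\ coll q = o.

Lemma coll_spec p : (exists o, ~ ImP p o) -> ~ ImP p (coll p) /\ forall o', ~ ImP p o' -> le (coll p) o'.
Proof.
  intros Hr.
  assert (E : forall o, (exists q (H : R q p), coll q = o) <-> ImP p o).
  { intros o; split. - intros [q [H e]]; exists q; auto. - intros [q [H e]]; exists q, H; auto. }
  rewrite coll_eq. unfold collF.
  pose proof (epsilon_spec (inhabits t0) (fun o => (~ exists q (H : R q p), coll q = o) /\
     forall o', (~ exists q (H : R q p), coll q = o') -> le o o')) as S.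
  destruct S as [S1 S2].
  - destruct (min_ex (fun o => ~ ImP p o) Hr) as [m [Hm Hmin]]. exists m. split.
    + rewrite E; auto.
    + intros o' h. apply Hmin. rewrite <- E; auto.
  - split.
    + rewrite <- E. exact S1.
    + intros o' h. apply S2. rewrite E; auto.
Qed.

Lemma coll_main p : (exists o, ~ ImP p o) -> forall x, ImP p x <-> lt x (coll p).
Proof.
  induction p as [p IH] using (well_founded_induction Rwf).
  intros Hr. destruct (coll_spec p Hr) as [S1 S2]. intros x. split.
  - intros [q [Hq Eq]]. subst x. apply NNPP. intros Hn. apply not_lt_le in Hn.
    destruct Hn as [h|h].
    + assert (Hrq : exists o, ~ ImP q o).
      { destruct Hr as [o Ho]. exists o. intros [q' [H1 H2]]. apply Ho. exists q'. split; eauto. }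
      apply (proj2 (IH q Hq Hrq (coll p))) in h. destruct h as [q' [H1 H2]].
      apply S1. exists q'. split; eauto.
    + apply S1. exists q. split; auto.
  - intros Hx. apply NNPP. intros Hn. apply (le_not_lt _ _ (S2 x Hn) Hx).
Qed.

Lemma coll_mono p q : (exists o, ~ ImP p o) -> R q p -> lt (coll q) (coll p).
Proof. intros Hr H. apply (coll_main p Hr). exists q; auto. Qed.

End Coll.

Section SubColl.
Variable Y : T -> Prop.
Variable t0 : T.
Definition RY (q p : T) : Prop := lt q p /\ Y q.
Lemma RY_wf : well_founded RY.
Proof.
  intros a. induction a as [a IH] using (well_founded_induction wf).
  constructor. intros y [Hy _]. apply IH; auto.
Qed.
Lemma RY_tr : forall a b c, RY a b -> RY b c -> RY a c.
Proof. intros a b c [H1 H2] [H3 H4]. split; eauto using trans. Qed.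

Definition scoll := coll T RY RY_wf t0.

Lemma scoll_le p : (exists o, ~ ImP T RY RY_wf t0 p o) /\ le (scoll p) p.
Proof.
  induction p as [p IH] using (well_founded_induction wf).
  assert (Hr : exists o, ~ ImP T RY RY_wf t0 p o).
  { exists p. intros [q [[Hq HY] E]]. destruct (IH q Hq) as [_ Hle].
    unfold scoll in Hle. rewrite E in Hle. apply (le_not_lt _ _ Hle Hq). }
  split; auto. apply (coll_spec T RY RY_wf t0 p Hr). intros [q [[Hq HY] E]].
  destruct (IH q Hq) as [_ Hle]. unfold scoll in Hle. rewrite E in Hle. apply (le_not_lt _ _ Hle Hq).
Qed.

Lemma collapse : (exists b, forall y, Y y -> lt y b) -> exists o, inj Y (seg o) /\ inj (seg o) Y.
Proof.
  intros [b Hb].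
  set (Img := fun o => exists y, Y y /\ scoll y = o).
  assert (Hnb : exists o, ~ Img o).
  { exists b. intros [y [Hy E]]. destruct (scoll_le y) as [_ Hle]. rewrite E in Hle.
    apply (le_not_lt _ _ Hle (Hb y Hy)). }
  destruct (min_ex _ Hnb) as [o [Ho Hmin]].
  assert (Hin : forall y, Y y -> lt (scoll y) o).
  { intros y Hy. apply NNPP. intros Hn. apply not_lt_le in Hn. destruct Hn as [h|h].
    - destruct (scoll_le y) as [Hr _].
      apply (proj2 (coll_main T RY RY_wf RY_tr t0 y Hr o)) in h. destruct h as [q [[_ Hq] E]].
      apply Ho. exists q; auto.
    - apply Ho. exists y; auto. }
  exists o. split.
  - exists scoll. split; auto.
    intros x y Hx Hy E. destruct (trich x y) as [h|[h|h]]; auto; exfalso.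
    + destruct (scoll_le y) as [Hr _]. assert (L := coll_mono T RY RY_wf RY_tr t0 y x Hr (conj h Hx)).
      unfold scoll in E. rewrite E in L. apply (irr _ L).
    + destruct (scoll_le x) as [Hr _]. assert (L := coll_mono T RY RY_wf RY_tr t0 x y Hr (conj h Hy)).
      unfold scoll in E. rewrite E in L. apply (irr _ L).
  - destruct (classic (exists y, Y y)) as [Hne|He].
    + apply (inj_of_surj Y (seg o) scoll Hne). intros x Hx. apply NNPP. intros Hn.
      apply (le_not_lt _ _ (Hmin x (fun h => Hn h)) Hx).
    + exists (fun x => x). split.
      * intros x Hx. exfalso. assert (Hix : Img x).
        { apply NNPP. intros Hn. apply (le_not_lt _ _ (Hmin x Hn) Hx). }
        destruct Hix as [y [Hy _]]. apply He; eauto.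
      * auto.
Qed.
End SubColl.

Definition mx (a b : T) : T := if excluded_middle_informative (lt a b) then b else a.
Lemma mx_ge1 a b : le a (mx a b).
Proof. unfold mx. destruct (excluded_middle_informative (lt a b)); [apply lt_le; auto| apply le_refl]. Qed.
Lemma mx_ge2 a b : le b (mx a b).
Proof. unfold mx. destruct (excluded_middle_informative (lt a b)); [apply le_refl| apply not_lt_le; auto]. Qed.
Lemma mx_or a b : mx a b = a \/ mx a b = b.
Proof. unfold mx. destruct (excluded_middle_informative (lt a b)); auto. Qed.
Lemma mx_lt a b c : lt a c -> lt b c -> lt (mx a b) c.
Proof. intros. destruct (mx_or a b) as [e|e]; rewrite e; auto. Qed.

Definition mxp (p : T * T) := mx (fst p) (snd p).
Definition G (p q : T * T) : Prop :=
  lt (mxp p) (mxp q) \/ (mxp p = mxp q /\ (lt (fst p) (fst q) \/ (fst p = fst q /\ lt (snd p) (snd q)))).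

Lemma G_wf : well_founded G.
Proof.
  intros [a b]. remember (mx a b) as M eqn:HM. revert a b HM.
  induction M as [M IHM] using (well_founded_induction wf).
  intros a. induction a as [a IHa] using (well_founded_induction wf).
  intros b. induction b as [b IHb] using (well_founded_induction wf).
  intros HM. constructor. intros [c d] HG. unfold G, mxp in HG; simpl in HG.
  destruct HG as [H|[H1 [H2|[H2 H3]]]].
  - rewrite <- HM in H. apply (IHM _ H c d eq_refl).
  - rewrite <- HM in H1. apply (IHa c H2 d (eq_sym H1)).
  - subst c. rewrite <- HM in H1. apply (IHb d H3 (eq_sym H1)).
Qed.

Lemma G_tr : forall p q r, G p q -> G q r -> G p r.
Proof.
  intros p q r. unfold G.
  intros [H|[H1 H2]] [H'|[H1' H2']].
  - left; eauto using trans.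
  - left. rewrite <- H1'. auto.
  - left. rewrite H1. auto.
  - right. split; [congruence|].
    destruct H2 as [h|[h h']]; destruct H2' as [g|[g g']].
    + left; eauto using trans.
    + left; rewrite <- g; auto.
    + left; rewrite h; auto.
    + right; split; [congruence| eauto using trans].
Qed.

Lemma G_total p q : p <> q -> G p q \/ G q p.
Proof.
  intros Hne. unfold G. destruct (trich (mxp p) (mxp q)) as [h|[h|h]]; auto.
  destruct (trich (fst p) (fst q)) as [h1|[h1|h1]]; auto.
  destruct (trich (snd p) (snd q)) as [h2|[h2|h2]]; auto 6.
  exfalso. apply Hne. destruct p, q; simpl in *; subst; reflexivity.
Qed.

Lemma G_bound q p : G q p -> le (fst q) (mxp p) /\ le (snd q) (mxp p).
Proof.
  unfold G. intros HG.
  assert (A1 := mx_ge1 (fst q) (snd q)). assert (A2 := mx_ge2 (fst q) (snd q)).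
  fold (mxp q) in A1, A2.
  destruct HG as [H|[H1 _]].
  - split; left; eapply le_lt_trans; eauto.
  - rewrite <- H1; auto.
Qed.

Lemma hess : forall v, Inf (seg v) -> inj (prodP (seg v) (seg v)) (seg v).
Proof.
  intros v. induction v as [v IH] using (well_founded_induction wf). intros HI.
  destruct (classic (exists u, lt u v /\ inj (seg v) (seg u))) as [[u [Huv Hinj]]|Hcard].
  - assert (HIu : Inf (seg u)) by (eapply Inf_inj; eauto).
    specialize (IH u Huv HIu).
    eapply inj_trans; [exact (inj_prod _ _ _ _ Hinj Hinj)|]. eapply inj_trans; [exact IH|].
    apply inj_cod with (Q := seg u); [intros x hx; unfold seg in *; eauto using trans | apply inj_refl].
  - assert (Hlim : forall m, lt m v -> exists m', lt m m' /\ lt m' v).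
    { intros m Hm. apply NNPP; intros Hn.
      assert (Hs : is_succ lt m v).
      { split; auto. intros g Hg. apply not_lt_le. intros Hgv. apply Hn. eauto. }
      destruct (classic (Inf (seg m))) as [h|h].
      + apply Hcard. exists m. split; auto. apply hotel; auto.
      + apply h. eapply unhotel; eauto. }
    assert (Hv0 : exists t, lt t v) by (destruct HI as [e [He _]]; exists (e 0); apply He; auto).
    destruct Hv0 as [t0 Ht0].
    pose (R := fun q p => G q p /\ prodP (seg v) (seg v) q).
    assert (Rwf : well_founded R).
    { intros a. induction a as [a IHa] using (well_founded_induction G_wf). constructor.
      intros y [Hy _]. apply IHa; auto. }
    assert (Rtr : forall a b c, R a b -> R b c -> R a c).
    { intros a b c [H1 H2] [H3 H4]. split; eauto using G_tr. }
    pose (phi := coll (T * T) R Rwf t0).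
    assert (Room : forall p, prodP (seg v) (seg v) p -> exists o, lt o v /\ ~ ImP (T * T) R Rwf t0 p o).
    { intros p. induction p as [p IHp] using (well_founded_induction G_wf). intros Hp.
      apply NNPP. intros Hn.
      assert (Hall : forall o, lt o v -> ImP (T * T) R Rwf t0 p o).
      { intros o Ho. apply NNPP. intros h. apply Hn. eauto. }
      set (m := mxp p). assert (Hm : lt m v) by (apply mx_lt; apply Hp).
      destruct (Hlim m Hm) as [m' [Hmm' Hm'v]].
      assert (Hin : inj (seg v) (prodP (seg m') (seg m'))).
      { apply inj_cod with (Q := fun q => R q p).
        - intros q [Hg _]. destruct (G_bound q p Hg) as [b1 b2]. split; eapply le_lt_trans; eauto.
        - apply (inj_of_surj (fun q => R q p) (seg v) phi).
          + destruct (Hall t0 Ht0) as [q [Hq _]]. eauto.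
          + intros o Ho. destruct (Hall o Ho) as [q [Hq E]]. eauto. }
      destruct (classic (Inf (seg m'))) as [Hi|Hi].
      + apply Hcard. exists m'. split; auto. eapply inj_trans; [exact Hin| apply IH; auto].
      + apply Hi. apply (fin_sq (seg m') m'); [intros x hx; exact hx|]. eapply Inf_inj; eauto. }
    exists phi. split.
    + intros p Hp. destruct (Room p Hp) as [o [Ho Hno]]. eapply le_lt_trans; [|exact Ho].
      exact (proj2 (coll_spec (T * T) R Rwf t0 p (ex_intro _ o Hno)) o Hno).
    + intros p q Hp Hq E. destruct (classic (p = q)) as [|Hne]; auto. exfalso.
      destruct (G_total p q Hne) as [h|h].
      * destruct (Room q Hq) as [o [_ Hno]].
        assert (L := coll_mono (T * T) R Rwf Rtr t0 q p (ex_intro _ o Hno) (conj h Hp)).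
        fold phi in L. rewrite E in L. apply (irr _ L).
      * destruct (Room p Hp) as [o [_ Hno]].
        assert (L := coll_mono (T * T) R Rwf Rtr t0 p q (ex_intro _ o Hno) (conj h Hq)).
        fold phi in L. rewrite E in L. apply (irr _ L).
Qed.

Lemma hessP {X : Type} (Q : X -> Prop) b : Inf Q -> inj Q (seg b) -> inj (prodP Q Q) Q.
Proof.
  intros HI [f [Hf1 Hf2]].
  set (Y := fun y => exists x, Q x /\ f x = y).
  assert (Hne : exists x, Q x) by (destruct HI as [e [He _]]; exists (e 0); auto).
  assert (HQY : inj Q Y) by (exists f; split; [intros x hx; exists x; auto | auto]).
  assert (HYQ : inj Y Q) by (apply (inj_of_surj Q Y f Hne); intros y [x [hx e]]; eauto).
  destruct Hne as [x0 _].
  destruct (collapse Y (f x0)) as [o [H1 H2]].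
  { exists b. intros y [x [hx e]]. subst y. apply Hf1; auto. }
  assert (HQo : inj Q (seg o)) by (eapply inj_trans; eauto).
  assert (HoQ : inj (seg o) Q) by (eapply inj_trans; eauto).
  assert (HIo : Inf (seg o)) by (eapply Inf_inj; eauto).
  eapply inj_trans; [exact (inj_prod _ _ _ _ HQo HQo)|].
  eapply inj_trans; [apply hess; exact HIo| exact HoQ].
Qed.

Lemma incr_inj (s : nat -> T) : (forall n, lt (s n) (s (S n))) -> forall i j, s i = s j -> i = j.
Proof.
  intros Hl.
  assert (Hm : forall i d, lt (s i) (s (S d + i))).
  { intros i d. induction d as [|d IH]; simpl; [apply Hl|]. eapply trans; [apply IH|]. apply (Hl (S (d + i))). }
  intros i j E. destruct (PeanoNat.Nat.lt_trichotomy i j) as [h|[h|h]]; auto.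
  - exfalso. specialize (Hm i (j - S i)). replace (S (j - S i) + i) with j in Hm by lia. rewrite E in Hm. apply (irr _ Hm).
  - exfalso. specialize (Hm j (i - S j)). replace (S (i - S j) + j) with i in Hm by lia. rewrite E in Hm. apply (irr _ Hm).
Qed.

Lemma fin_inj : forall c (X : Type) (Q : X -> Prop), ~ Inf (seg c) -> Inf Q -> inj (seg c) Q.
Proof.
  intros c. induction c as [c IH] using (well_founded_induction wf). intros X Q HF HI.
  destruct HI as [e [He1 He2]].
  destruct (classic (exists x, lt x c)) as [[x0 Hx0]|Hemp].
  2:{ exists (fun _ => e 0). split. - intros x Hx. exfalso; apply Hemp; eauto. - intros x y Hx; exfalso; apply Hemp; eauto. }
  destruct (classic (exists m, is_succ lt m c)) as [[m Hs]|Hns].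
  - assert (HFm : ~ Inf (seg m)).
    { intros h. apply HF. eapply Inf_mono; [|exact h]. intros x hx. unfold seg in *. eapply trans; [exact hx| apply Hs]. }
    destruct (IH m (proj1 Hs) X Q HFm (ex_intro _ e (conj He1 He2))) as [f [Hf1 Hf2]].
    set (Im := fun y => exists x, lt x m /\ f x = y).
    assert (Hn : exists n, ~ Im (e n)).
    { apply NNPP. intros Hn. apply HFm. assert (Hall : forall n, Im (e n)) by (intros n; apply NNPP; intros h; apply Hn; eauto).
      assert (HIm : Inf Im) by (exists e; split; auto).
      destruct (classic (exists x, lt x m)) as [Hne|Hne].
      - eapply Inf_inj; [exact HIm|]. apply (inj_of_surj (seg m) Im f Hne). intros y [x [hx E]]; eauto.
      - exfalso. destruct (Hall 0) as [x [hx _]]. apply Hne; eauto. }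
    destruct Hn as [n Hn].
    exists (fun x => if excluded_middle_informative (x = m) then e n else f x). split.
    + intros x Hx. destruct (excluded_middle_informative (x = m)); [apply He1; auto|].
      apply Hf1. apply (seg_succ m c Hs) in Hx. destruct Hx; [auto|contradiction].
    + intros x y Hx Hy. apply (seg_succ m c Hs) in Hx. apply (seg_succ m c Hs) in Hy.
      destruct (excluded_middle_informative (x = m)) as [ex|nx];
      destruct (excluded_middle_informative (y = m)) as [ey|ny]; try congruence.
      * intros E. exfalso. apply Hn. exists y. destruct Hy as [hy|hy]; [split; auto|contradiction].
      * intros E. exfalso. apply Hn. exists x. destruct Hx as [hx|hx]; [split; auto|contradiction].
      * intros E. apply Hf2; auto; [destruct Hx; [auto|contradiction]|destruct Hy; [auto|contradiction]].
  - exfalso. apply HF.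
    assert (Hlim : forall m, lt m c -> exists m', lt m m' /\ lt m' c).
    { intros m Hm. apply NNPP. intros Hn. apply Hns. exists m. split; auto.
      intros g Hg. apply not_lt_le. intros h. apply Hn; eauto. }
    destruct (choice_on x0 (fun m => lt m c) (fun m m' => lt m m' /\ lt m' c) Hlim) as [nx Hnx].
    set (s := fix s n := match n with 0 => x0 | S n => nx (s n) end).
    assert (Hc : forall n, lt (s n) c). { induction n; simpl; auto. apply Hnx; auto. }
    assert (Hl : forall n, lt (s n) (s (S n))). { intros n. simpl. apply Hnx; auto. }
    exists s. split; [intros; apply Hc|]. intros i j _ _. apply incr_inj; auto.
Qed.

Variable K : Type.
Variable Cs : T -> (T -> Prop) -> Prop.
Variable A : T -> Prop.
Hypothesis HR : regular_uncountable_cardinal lt.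
Hypothesis HK : card_lt K T.
Hypothesis HC : coherent_seq lt K Cs.
Hypothesis HAunb : forall g, exists a, A a /\ le g a.
Hypothesis HAC : forall alpha, A alpha -> exists C, Cs alpha C /\ (forall b, A b -> lt b alpha -> C b).
Variable t0 : T.

Definition Small {X : Type} (Q : X -> Prop) : Prop :=
  exists (W : Type) (Wp : W -> Prop), inj Q Wp /\ ~ inj (fun _ : T => True) Wp.

Lemma reg_bound (P : T -> Prop) : Small P -> exists b, forall a, P a -> lt a b.
Proof.
  intros [W [Wp [[f [Hf1 Hf2]] Hn]]].
  destruct HR as [_ [_ [Hreg _]]]. apply Hreg. split.
  - exists (@proj1_sig T P). intros [a ha] [b hb] E. simpl in E. subst. f_equal. apply proof_irrelevance.
  - intros [g Hg]. apply Hn. exists (fun t => f (proj1_sig (g t))). split.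
    + intros; apply Hf1; apply proj2_sig.
    + intros x y _ _ E. apply Hg. apply Hf2 in E; try apply proj2_sig.
      destruct (g x) as [a ha], (g y) as [b hb]; simpl in *; subst; f_equal; apply proof_irrelevance.
Qed.

Lemma small_inj {X Y : Type} (P : X -> Prop) (Q : Y -> Prop) : inj P Q -> Small Q -> Small P.
Proof. intros H [W [Wp [H1 H2]]]. exists W, Wp. split; auto. eapply inj_trans; eauto. Qed.

Lemma fam_bound {X : Type} (Q : X -> Prop) (g : X -> T) : Small Q -> exists b, forall x, Q x -> lt (g x) b.
Proof.
  intros HS. destruct (classic (exists x, Q x)) as [Hne|He].
  - set (Im := fun y => exists x, Q x /\ g x = y).
    assert (H : inj Im Q) by (apply (inj_of_surj Q Im g Hne); intros y [x [hx e]]; eauto).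
    destruct (reg_bound Im (small_inj _ _ H HS)) as [b Hb]. exists b. intros x Hx. apply Hb. exists x; auto.
  - exists t0. intros x Hx. exfalso; eauto.
Qed.

Lemma small_K : Small (fun _ : K => True).
Proof.
  exists K, (fun _ => True). split; [apply inj_refl|]. intros [f [_ Hf]].
  destruct HK as [_ Hn]. apply Hn. exists f. intros a b E. apply Hf; auto.
Qed.

Lemma small_seg a : Small (seg a).
Proof.
  exists T, (seg a). split; [apply inj_refl|]. intros [f [Hf1 Hf2]].
  destruct HR as [_ [Hinit _]]. destruct (Hinit a) as [_ Hn]. apply Hn.
  exists (fun t => exist _ (f t) (Hf1 t I)). intros x y E. apply Hf2; auto.
  apply (f_equal (@proj1_sig _ _)) in E. exact E.
Qed.

Lemma small_nat : Small (fun _ : nat => True).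
Proof.
  exists nat, (fun _ => True). split; [apply inj_refl|]. intros [f [_ Hf]].
  destruct HR as [_ [_ [_ Hn]]]. apply Hn. exists f. intros a b E. apply Hf; auto.
Qed.

Lemma no_max x : exists y, lt x y.
Proof.
  assert (HS : Small (fun y => y = x)).
  { eapply small_inj; [|exact small_nat]. exists (fun _ => 0). split; auto. intros a b ea eb _. congruence. }
  destruct (reg_bound _ HS) as [b Hb]. exists b. auto.
Qed.

Lemma small_le x : Small (fun y => le y x).
Proof.
  destruct (no_max x) as [y Hy]. eapply small_inj; [|exact (small_seg y)].
  exists (fun z => z). split; auto. intros z hz. unfold seg. eapply le_lt_trans; eauto.
Qed.

Lemma A_above g : exists a, A a /\ lt g a.
Proof.
  destruct (no_max g) as [y Hy]. destruct (HAunb y) as [a [Ha Hle]]. exists a. split; auto.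
  eapply lt_le_trans; eauto.
Qed.

Lemma ph {Y : Type} (P : T -> Prop) (F : T -> Y) (Q : Y -> Prop) : Small Q ->
  (forall g, exists a, P a /\ lt g a) -> (forall a, P a -> Q (F a)) ->
  exists y, Q y /\ forall g, exists a, P a /\ lt g a /\ F a = y.
Proof.
  intros HS Hunb HPQ. apply NNPP. intros Hn.
  assert (H : forall y, Q y -> exists g, forall a, P a -> F a = y -> le a g).
  { intros y Hy. apply NNPP. intros Hn2. apply Hn. exists y. split; auto.
    intros g. apply NNPP. intros Hn3. apply Hn2. exists g. intros a Ha E. apply not_lt_le. intros h. apply Hn3. eauto. }
  destruct (choice_on t0 Q _ H) as [bnd Hbnd].
  destruct (fam_bound Q bnd HS) as [b Hb].
  destruct (Hunb b) as [a [Ha Hba]].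
  assert (L1 := Hbnd (F a) (HPQ a Ha) a Ha eq_refl).
  assert (L2 := Hb (F a) (HPQ a Ha)).
  apply (lt_asym _ _ Hba). eapply le_lt_trans; eauto.
Qed.

Lemma HC_ne a : exists C, Cs a C. Proof. apply HC. Qed.
Lemma HC_club a C : Cs a C -> club_in lt a C. Proof. apply HC. Qed.
Lemma HC_coh b C a : Cs b C -> acc lt C a -> Cs a (restrict lt C a). Proof. apply HC. Qed.

Lemma inj_Cs_K a : inj (Cs a) (fun _ : K => True).
Proof.
  destruct HC as [_ [_ [Hw _]]]. destruct (Hw a) as [[f Hf] _].
  destruct (HC_ne a) as [C0 H0].
  exists (fun C => match excluded_middle_informative (Cs a C) with
                   | left h => f (exist _ C h) | right _ => f (exist _ C0 H0) end).
  split; auto. intros x y Hx Hy.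
  destruct (excluded_middle_informative (Cs a x)); [|contradiction].
  destruct (excluded_middle_informative (Cs a y)); [|contradiction].
  intros E. apply Hf in E. apply (f_equal (@proj1_sig _ _)) in E. exact E.
Qed.

Lemma notinj_K_Cs a : ~ inj (fun _ : K => True) (Cs a).
Proof.
  destruct HC as [_ [_ [Hw _]]]. destruct (Hw a) as [_ Hn]. intros [f [Hf1 Hf2]]. apply Hn.
  exists (fun k => exist _ (f k) (Hf1 k I)). intros x y E. apply Hf2; auto.
  apply (f_equal (@proj1_sig _ _)) in E. exact E.
Qed.

Lemma small_Cs a : Small (Cs a).
Proof. eapply small_inj; [apply inj_Cs_K| apply small_K]. Qed.

Definition Cf (a : T) : T -> Prop :=
  epsilon (inhabits (fun _ : T => False)) (fun C => Cs a C /\ forall b, A b -> lt b a -> C b).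

Lemma Cf_spec a : A a -> Cs a (Cf a) /\ forall b, A b -> lt b a -> Cf a b.
Proof. intros Ha. unfold Cf. apply epsilon_spec. apply HAC; auto. Qed.

Lemma restr_restr (X : T -> Prop) a b : le a b -> restrict lt (restrict lt X b) a = restrict lt X a.
Proof.
  intros H. apply functional_extensionality; intros x. apply propositional_extensionality.
  unfold restrict. split; [intros [[h1 h2] h3]; auto| intros [h1 h3]; repeat split; auto].
  eapply lt_le_trans; eauto.
Qed.

Lemma restr_self (X : T -> Prop) a : restrict lt (restrict lt X a) a = restrict lt X a.
Proof. apply restr_restr. apply le_refl. Qed.

Definition L (e : T) : Prop := acc lt A e.

Definition U (e : T) (E : T -> Prop) : Prop :=
  forall g, exists a, A a /\ lt g a /\ lt e a /\ E = restrict lt (Cf a) e.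

Lemma acc_C e a : L e -> A a -> lt e a -> acc lt (Cf a) e.
Proof.
  intros He Ha Hea. destruct (Cf_spec a Ha) as [HCs Hsub]. split.
  - destruct (HC_club a _ HCs) as [_ [Hunb _]]. apply Hunb; auto.
  - intros g Hg. destruct He as [_ He]. destruct (He g Hg) as [b [Hb [h1 h2]]]. exists b.
    split; auto. apply Hsub; auto. eauto using trans.
Qed.

Lemma V_Cs e a : L e -> A a -> lt e a -> Cs e (restrict lt (Cf a) e).
Proof. intros He Ha Hea. apply (HC_coh a); [apply Cf_spec; auto| apply acc_C; auto]. Qed.

Lemma U_Cs e E : L e -> U e E -> Cs e E.
Proof. intros He HU. destruct (HU t0) as [a [Ha [_ [Hea E1]]]]. subst. apply V_Cs; auto. Qed.

Lemma U_self e E : U e E -> restrict lt E e = E.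
Proof. intros HU. destruct (HU t0) as [a [_ [_ [_ E1]]]]. subst. apply restr_self. Qed.

Lemma U_restr e e' E : le e e' -> U e' E -> U e (restrict lt E e).
Proof.
  intros H HU g. destruct (HU g) as [a [Ha [h1 [h2 E1]]]]. exists a. repeat split; auto.
  - eapply le_lt_trans; eauto.
  - subst. apply restr_restr; auto.
Qed.

Lemma U_small e : L e -> Small (U e).
Proof. intros He. eapply small_inj; [|exact (small_Cs e)]. exists (fun E => E). split; auto. intros; apply U_Cs; auto. Qed.

Lemma U_ext e e' E : L e' -> lt e e' -> U e E -> exists E', U e' E' /\ restrict lt E' e = E.
Proof.
  intros He' Hee' HU.
  destruct (ph (fun a => A a /\ lt e' a /\ restrict lt (Cf a) e = E) (fun a => restrict lt (Cf a) e') (Cs e')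
             (small_Cs e')) as [E' [HE' Hunb]].
  - intros g. destruct (HU (mx g e')) as [a [Ha [h1 [h2 E1]]]]. exists a. repeat split; auto.
    + eapply le_lt_trans; [apply mx_ge2| exact h1].
    + eapply le_lt_trans; [apply mx_ge1| exact h1].
  - intros a [Ha [h _]]. apply V_Cs; auto.
  - exists E'. split.
    + intros g. destruct (Hunb g) as [a [[Ha [h1 h3]] [h2 E1]]]. exists a. repeat split; auto.
    + destruct (Hunb t0) as [a [[Ha [h1 h3]] [h2 E1]]]. subst E'. rewrite restr_restr; auto. apply lt_le; auto.
Qed.

Lemma U_ne e : L e -> exists E, U e E.
Proof.
  intros He.
  destruct (ph (fun a => A a /\ lt e a) (fun a => restrict lt (Cf a) e) (Cs e) (small_Cs e)) as [E [HE Hunb]].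
  - intros g. destruct (A_above (mx g e)) as [a [Ha h]]. exists a. repeat split; auto.
    + eapply le_lt_trans; [apply mx_ge2| exact h].
    + eapply le_lt_trans; [apply mx_ge1| exact h].
  - intros a [Ha h]. apply V_Cs; auto.
  - exists E. intros g. destruct (Hunb g) as [a [[Ha h1] [h2 E1]]]. exists a. repeat split; auto.
Qed.

Lemma U_mono e e' : L e' -> le e e' -> inj (U e) (U e').
Proof.
  intros He' [Hlt|Heq]; [|subst; apply inj_refl].
  destruct (choice_on (fun _ : T => False) (U e) (fun E E' => U e' E' /\ restrict lt E' e = E)
     (fun E HE => U_ext e e' E He' Hlt HE)) as [f Hf].
  exists f. split; [intros; apply Hf; auto|].
  intros x y Hx Hy E. destruct (Hf x Hx) as [_ E1]. destruct (Hf y Hy) as [_ E2]. rewrite <- E1, <- E2, E; auto.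
Qed.

Lemma U_K e : L e -> inj (U e) (fun _ : K => True).
Proof. intros He. apply (inj_trans _ (Cs e)); [|apply inj_Cs_K]. exists (fun E => E). split; auto. intros; apply U_Cs; auto. Qed.

Lemma notinj_K_U e : L e -> ~ inj (fun _ : K => True) (U e).
Proof.
  intros He H. apply (notinj_K_Cs e). eapply inj_trans; [exact H|]. exists (fun E => E). split; auto.
  intros; apply U_Cs; auto.
Qed.

Lemma B_ex (h : T -> T) : exists B : T -> T, forall s, A (B s) /\ lt s (B s) /\ forall y, le y s -> lt (h y) (B s).
Proof.
  assert (H : forall s, exists a, A a /\ lt s a /\ forall y, le y s -> lt (h y) a).
  { intros s. destruct (fam_bound _ h (small_le s)) as [b Hb].
    destruct (A_above (mx b s)) as [a [Ha Hl]]. exists a. repeat split; auto.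
    - eapply le_lt_trans; [apply mx_ge2| exact Hl].
    - intros y Hy. eapply trans; [apply Hb; auto|]. eapply le_lt_trans; [apply mx_ge1| exact Hl]. }
  destruct (choice_on t0 (fun _ => True) _ (fun s _ => H s)) as [B HB]. exists B. intros s. apply HB; auto.
Qed.

Lemma omega_closure (h : T -> T) x : exists e, L e /\ lt x e /\ forall s, lt s e -> lt (h s) e.
Proof.
  destruct (B_ex h) as [B HB].
  set (s := fix s n := match n with 0 => B x | S n => B (s n) end).
  assert (HA : forall n, A (s n)) by (intros n; destruct n; apply HB).
  assert (Hl : forall n, lt (s n) (s (S n))) by (intros n; apply HB).
  destruct (fam_bound (fun _ : nat => True) s small_nat) as [b Hb].
  destruct (sup_ex (fun y => exists n, s n = y)) as [e [He1 He2]].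
  { exists b. intros y [n E]. subst. left. apply Hb; auto. }
  assert (Hsn : forall n, lt (s n) e). { intros n. eapply lt_le_trans; [apply Hl| apply He1; eauto]. }
  assert (Hbelow : forall y, lt y e -> exists n, lt y (s n)).
  { intros y Hy. apply NNPP. intros Hn. assert (Hub : forall z, (exists n, s n = z) -> le z y).
    { intros z [n E]. subst. apply not_lt_le. intros h'. apply Hn. eauto. }
    apply (le_not_lt _ _ (He2 y Hub) Hy). }
  exists e. repeat split.
  - destruct (HAunb e) as [a [Ha ha]]. eauto.
  - intros g Hg. destruct (Hbelow g Hg) as [n Hn]. exists (s n). auto.
  - eapply lt_le_trans; [apply (HB x)| apply He1; exists 0; auto].
  - intros y Hy. destruct (Hbelow y Hy) as [n Hn]. eapply trans; [|apply (Hsn (S n))].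
    simpl. apply HB. left; auto.
Qed.

Definition Good (e : T) : Prop :=
  forall g : (T -> Prop) -> T, (forall E, U e E -> lt (g E) e) -> exists z, lt z e /\ forall E, U e E -> le (g E) z.

Definition Dif (s e : T) : Prop :=
  forall E E', U e E -> U e E' -> E <> E' -> exists x, le x s /\ ~ (E x <-> E' x).

Lemma F1 e : L e -> Good e -> (exists x, lt x e) -> exists z, lt z e /\ Dif z e.
Proof.
  intros He HG [x0 Hx0].
  pose (d := fun (E E' : T -> Prop) => epsilon (inhabits t0) (fun x => lt x e /\ ~ (E x <-> E' x))).
  pose (d' := fun E E' => if excluded_middle_informative (lt (d E E') e) then d E E' else x0).
  assert (Hd' : forall E E', lt (d' E E') e).
  { intros E E'. unfold d'. destruct (excluded_middle_informative (lt (d E E') e)); auto. }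
  assert (Hz : forall E, exists z, lt z e /\ forall E', U e E' -> le (d' E E') z).
  { intros E. apply HG. intros; auto. }
  destruct (choice_on t0 (fun _ : T -> Prop => True) _ (fun E _ => Hz E)) as [zf Hzf].
  destruct (HG zf (fun E _ => proj1 (Hzf E I))) as [z [Hz1 Hz2]].
  exists z. split; auto. intros E E' HE HE' Hne.
  assert (Hex : exists x, lt x e /\ ~ (E x <-> E' x)).
  { apply NNPP; intros Hn. apply Hne. rewrite <- (U_self e E HE), <- (U_self e E' HE').
    apply functional_extensionality; intros x; apply propositional_extensionality. unfold restrict.
    split; intros [h1 h2]; split; auto; destruct (classic (E x <-> E' x)) as [hh|hh];
      try tauto; exfalso; apply Hn; exists x; auto. }
  assert (Hds := epsilon_spec (inhabits t0) _ Hex).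
  exists (d E E'). split; [|apply Hds].
  eapply le_trans; [|apply (Hz2 E HE)]. eapply le_trans; [|apply (proj2 (Hzf E I) E' HE')].
  unfold d'. destruct (excluded_middle_informative (lt (d E E') e)) as [_|n]; [apply le_refl|].
  exfalso; apply n; apply Hds.
Qed.

Lemma F3 : (forall h : T -> T, exists e, L e /\ Good e /\ (exists x, lt x e) /\ forall s, lt s e -> lt (h s) e) ->
  exists s, forall g, exists e, lt g e /\ L e /\ Dif s e.
Proof.
  intros F2. apply NNPP. intros Hn.
  assert (H : forall s, exists g, forall e, lt g e -> L e -> ~ Dif s e).
  { intros s. apply NNPP. intros H1. apply Hn. exists s. intros g. apply NNPP. intros H2. apply H1.
    exists g. intros e h1 h2 h3. apply H2. exists e. auto. }
  destruct (choice_on t0 (fun _ => True) _ (fun s _ => H s)) as [hh Hhh].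
  destruct (F2 hh) as [e [He [HG [Hx Hcl]]]].
  destruct (F1 e He HG Hx) as [z [Hz HD]].
  exact (Hhh z I e (Hcl z Hz) He HD).
Qed.

Lemma thread_ex : (exists s, forall g, exists e, lt g e /\ L e /\ Dif s e) -> exists D, thread lt Cs D.
Proof.
  intros [s Hs].
  set (S := fun e => lt s e /\ L e /\ Dif s e).
  assert (HS : forall g, exists e, lt g e /\ S e).
  { intros g. destruct (Hs (mx g s)) as [e [h1 [h2 h3]]]. exists e. split.
    - eapply le_lt_trans; [apply mx_ge1| exact h1].
    - split; auto. eapply le_lt_trans; [apply mx_ge2| exact h1]. }
  destruct (HS t0) as [e0 [_ He0]].
  destruct (U_ne e0 (proj1 (proj2 He0))) as [E0 HE0].
  set (Node := fun e E => U e E /\ restrict lt E e0 = E0).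
  assert (Huniq : forall e E E', S e -> le e0 e -> Node e E -> Node e E' -> E = E').
  { intros e E E' [Hse [Hle HD]] H0 [HU1 HQ1] [HU2 HQ2]. apply NNPP. intros Hne.
    destruct (HD E E' HU1 HU2 Hne) as [x [Hx Hn]]. apply Hn.
    assert (Hx0 : lt x e0) by (eapply le_lt_trans; [exact Hx| apply He0]).
    assert (E1 : restrict lt E e0 x <-> restrict lt E' e0 x) by (rewrite HQ1, HQ2; tauto).
    unfold restrict in E1. split; intros h; apply E1; auto. }
  assert (Hexist : forall e, S e -> le e0 e -> exists E, Node e E).
  { intros e HSe [Hlt|Heq].
    - destruct (U_ext e0 e E0 (proj1 (proj2 HSe)) Hlt HE0) as [E [h1 h2]]. exists E. split; auto.
    - subst e. exists E0. split; auto. apply U_self; auto. }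
  assert (Hcoh : forall e e' E', le e0 e -> le e e' -> Node e' E' -> Node e (restrict lt E' e)).
  { intros e e' E' H1 H2 [HU HQ]. split.
    - apply (U_restr e e'); auto.
    - rewrite restr_restr; auto. }
  set (D := fun x => exists e E, S e /\ le e0 e /\ lt x e /\ Node e E /\ E x).
  assert (Dchar : forall e E, S e -> le e0 e -> Node e E -> forall x, lt x e -> (D x <-> E x)).
  { intros e E HSe He0e HN x Hx. split.
    - intros [e' [E' [HSe' [He0e' [Hxe' [HN' HE'x]]]]]].
      destruct (trich e' e) as [h|[h|h]].
      + assert (E' = restrict lt E e') by (apply (Huniq e'); auto; apply Hcoh with (e' := e); auto; apply lt_le; auto).
        subst E'. destruct HE'x; auto.
      + subst e'. rewrite (Huniq e E E' HSe He0e HN HN'). auto.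
      + assert (E = restrict lt E' e) by (apply (Huniq e); auto; apply Hcoh with (e' := e'); auto; apply lt_le; auto).
        subst E. split; auto.
    - intros HEx. exists e, E. auto 6. }
  assert (Big : forall a, exists e E, S e /\ le e0 e /\ lt a e /\ Node e E).
  { intros a. destruct (HS (mx a e0)) as [e [h1 h2]].
    assert (He0e : le e0 e) by (apply lt_le; eapply le_lt_trans; [apply mx_ge2| exact h1]).
    destruct (Hexist e h2 He0e) as [E HN]. exists e, E. split; [exact h2|]. split; [exact He0e|].
    split; [eapply le_lt_trans; [apply mx_ge1| exact h1]| exact HN]. }
  assert (NodeC : forall e E, S e -> Node e E -> exists a, A a /\ lt e a /\ E = restrict lt (Cf a) e).
  { intros e E _ [HU _]. destruct (HU t0) as [a [Ha [_ [h E1]]]]. eauto. }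
  exists D. split; [split|].
  - intros g. destruct (HAunb g) as [a [Ha Hga]]. destruct (Big a) as [e [E [HSe [He0e [Hae HN]]]]].
    exists a. split; auto. apply (Dchar e E HSe He0e HN a Hae).
    destruct (NodeC e E HSe HN) as [b [Hb [Heb E1]]]. rewrite E1. split; auto.
    apply (Cf_spec b Hb); auto. eauto using trans.
  - intros b Hlp. destruct (Big b) as [e [E [HSe [He0e [Hbe HN]]]]].
    apply (Dchar e E HSe He0e HN b Hbe).
    destruct (NodeC e E HSe HN) as [c [Hc [Hec E1]]]. rewrite E1. split; auto.
    destruct (Cf_spec c Hc) as [HCs _]. destruct (HC_club c _ HCs) as [_ [_ Hcl]].
    apply Hcl; [eauto using trans|]. destruct Hlp as [Hl1 Hl2]. split; auto.
    intros g Hg. destruct (Hl2 g Hg) as [a [Ha [h1 h2]]]. exists a. split; auto.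
    assert (Hae : lt a e) by eauto using trans.
    apply (Dchar e E HSe He0e HN a Hae) in Ha. rewrite E1 in Ha. apply Ha.
  - intros a' Hacc. destruct Hacc as [[a [Ha Hle]] Hacc2].
    destruct (Big a) as [e [E [HSe [He0e [Hae HN]]]]].
    assert (HCs : Cs e E) by (apply U_Cs; [apply HSe| apply HN]).
    assert (Hacc' : acc lt E a').
    { split.
      - exists a. split; auto. apply (Dchar e E HSe He0e HN a Hae); auto.
      - intros g Hg. destruct (Hacc2 g Hg) as [b [Hb [h1 h2]]]. exists b. split; auto.
        apply (Dchar e E HSe He0e HN b); auto. eapply trans; [exact h2| eapply le_lt_trans; [exact Hle| exact Hae]]. }
    assert (E1 : restrict lt D a' = restrict lt E a').
    { assert (Hx : forall y, lt y a' -> lt y e) by (intros y h2; eapply trans; [exact h2| eapply le_lt_trans; [exact Hle| exact Hae]]).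
      apply functional_extensionality; intros x; apply propositional_extensionality. unfold restrict.
      split; intros [h1 h2]; split; auto; apply (Dchar e E HSe He0e HN x (Hx x h2)); auto. }
    rewrite E1. apply (HC_coh e E a' HCs Hacc').
Qed.

Lemma good_fin e : L e -> ~ Inf (U e) -> (exists x, lt x e) -> Good e.
Proof.
  intros He HF [x0 Hx0] g Hg. apply NNPP; intros Hn.
  assert (H : forall z, lt z e -> exists E, U e E /\ lt z (g E)).
  { intros z Hz. apply NNPP; intros H1. apply Hn. exists z. split; auto. intros E HE.
    apply not_lt_le. intros h. apply H1; eauto. }
  destruct (choice_on (fun _ : T => False) (fun z => lt z e) _ H) as [nx Hnx].
  set (s := fix s n := match n with 0 => x0 | S n => g (nx (s n)) end).
  assert (Hs : forall n, lt (s n) e).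
  { induction n; simpl; auto. apply Hg. apply Hnx; auto. }
  assert (Hl : forall n, lt (s n) (s (S n))). { intros n. simpl. apply Hnx; auto. }
  apply HF. exists (fun n => nx (s n)). split; [intros; apply Hnx; auto|].
  intros i j _ _ E. assert (E2 : s (S i) = s (S j)) by (simpl; rewrite E; reflexivity).
  apply incr_inj in E2; auto.
Qed.

Lemma F2_inf e1 : L e1 -> Inf (U e1) -> forall h : T -> T,
  exists e, L e /\ Good e /\ (exists x, lt x e) /\ forall s, lt s e -> lt (h s) e.
Proof.
  intros He1 HI1 h.
  set (LL := fun e => L e /\ le e1 e).
  assert (HIe : forall e, LL e -> Inf (U e)).
  { intros e [He Hle]. eapply Inf_inj; [exact HI1| apply U_mono; auto]. }
  destruct HK as [[fK HfK] _].
  destruct (fam_bound (fun _ : K => True) fK small_K) as [bK HbK].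
  assert (HKseg : inj (fun _ : K => True) (seg bK)).
  { exists fK. split; [intros; apply HbK; auto| intros x y _ _; apply HfK]. }
  set (Pr := fun r => forall e, LL e -> ~ inj (seg r) (U e)).
  assert (PbK : Pr bK).
  { intros e [He _] H. apply (notinj_K_U e He). eapply inj_trans; eauto. }
  destruct (min_ex Pr (ex_intro _ bK PbK)) as [rho [Hrho Hmin]].
  assert (Hmin' : forall x, lt x rho -> exists e, LL e /\ inj (seg x) (U e)).
  { intros x Hx. apply NNPP. intros Hn. assert (Pr x).
    { intros e HLe H. apply Hn. eauto. }
    apply (le_not_lt _ _ (Hmin x H) Hx). }
  destruct (U_ne e1 He1) as [E1 HE1].
  assert (HLL1 : LL e1) by (split; auto; apply le_refl).
  assert (Hrne : exists x, lt x rho).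
  { apply NNPP. intros Hn. apply (Hrho e1 HLL1). exists (fun _ => E1). split.
    - intros x Hx. exfalso; eauto.
    - intros x y Hx. exfalso; eauto. }
  assert (Hlim : forall x, lt x rho -> exists x', lt x x' /\ lt x' rho).
  { intros x Hx. apply NNPP. intros Hn.
    assert (Hs : is_succ lt x rho).
    { split; auto. intros g Hg. apply not_lt_le. intros h'. apply Hn; eauto. }
    destruct (Hmin' x Hx) as [e [HLe Hinj]].
    destruct (classic (Inf (seg x))) as [Hi|Hi].
    - apply (Hrho e HLe). eapply inj_trans; [apply hotel; eauto| exact Hinj].
    - assert (Hf : ~ Inf (seg rho)) by (intros h'; apply Hi; eapply unhotel; eauto).
      apply (Hrho e1 HLL1). apply fin_inj; auto. }
  assert (Big : forall e, LL e -> forall g, (forall E, U e E -> lt (g E) rho) ->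
                  exists x, lt x rho /\ forall E, U e E -> le (g E) x).
  { intros e HLe g Hg. apply NNPP; intros Hn.
    assert (Hunb : forall x, lt x rho -> exists E, U e E /\ lt x (g E)).
    { intros x Hx. apply NNPP; intros H1. apply Hn. exists x. split; auto. intros E HE.
      apply not_lt_le. intros h'. apply H1; eauto. }
    destruct (choice_on t0 (U e) (fun E e' => LL e' /\ inj (seg (g E)) (U e'))
                (fun E HE => Hmin' (g E) (Hg E HE))) as [ef Hef].
    destruct (fam_bound (U e) ef (U_small e (proj1 HLe))) as [b Hb].
    destruct (omega_closure (fun x => x) (mx b e)) as [gs [Lgs [Hgs _]]].
    assert (LLgs : LL gs).
    { split; auto. apply lt_le. eapply le_lt_trans; [apply (proj2 HLe)|].
      eapply le_lt_trans; [apply mx_ge2| exact Hgs]. }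
    assert (Hinj1 : forall E, U e E -> exists k : T -> (T -> Prop),
               (forall x, seg (g E) x -> U gs (k x)) /\
               (forall x y, seg (g E) x -> seg (g E) y -> k x = k y -> x = y)).
    { intros E HE. destruct (Hef E HE) as [_ Hi].
      assert (Hi2 : inj (seg (g E)) (U gs)).
      { eapply inj_trans; [exact Hi| apply U_mono; auto]. apply lt_le.
        eapply trans; [apply Hb; auto|]. eapply le_lt_trans; [apply mx_ge1| exact Hgs]. }
      exact Hi2. }
    destruct (choice_on (fun _ : T => fun _ : T => False) (U e) _ Hinj1) as [kf Hkf].
    destruct (U_mono e gs Lgs (lt_le _ _ (le_lt_trans _ _ _ (mx_ge2 b e) Hgs))) as [f0 [Hf01 Hf02]].
    destruct (choice_on (fun _ : T => False) (fun x => lt x rho) _ Hunb) as [Ef HEf].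
    assert (Hpr : inj (seg rho) (prodP (U gs) (U gs))).
    { exists (fun x => (f0 (Ef x), kf (Ef x) x)). split.
      - intros x Hx. destruct (HEf x Hx) as [HU Hlt]. split; simpl.
        + apply Hf01; auto.
        + apply (Hkf (Ef x) HU); auto.
      - intros x y Hx Hy E. injection E; intros E2 E3.
        destruct (HEf x Hx) as [HUx Hltx]. destruct (HEf y Hy) as [HUy Hlty].
        apply Hf02 in E3; auto. rewrite <- E3 in E2, Hlty.
        apply (proj2 (Hkf (Ef x) HUx)); auto. }
    assert (Hh := hessP (U gs) bK (HIe gs LLgs) (inj_trans _ _ _ (U_K gs Lgs) HKseg)).
    apply (Hrho gs LLgs). eapply inj_trans; eauto. }
  destruct (B_ex h) as [B HB].
  pose (GF := fun (x : T) (rec : forall y, lt y x -> T) =>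
     epsilon (inhabits t0) (fun a => A a /\ lt e1 a /\ forall y (H : lt y x), lt (B (rec y H)) a)).
  pose (Gam := Fix wf (fun _ => T) GF).
  assert (Gam_eq : forall x, Gam x = GF x (fun y _ => Gam y)).
  { intros x. unfold Gam. apply (Fix_eq wf (fun _ => T) GF). intros x' f g H.
    assert (f = g). { apply functional_extensionality_dep; intros y. apply functional_extensionality_dep; intros hh. apply H. }
    subst; reflexivity. }
  assert (Gam_spec : forall x, A (Gam x) /\ lt e1 (Gam x) /\ forall y, lt y x -> lt (B (Gam y)) (Gam x)).
  { intros x. rewrite Gam_eq. unfold GF.
    assert (Ex : exists a, A a /\ lt e1 a /\ forall y (H : lt y x), lt (B (Gam y)) a).
    { destruct (fam_bound (seg x) (fun y => B (Gam y)) (small_seg x)) as [b Hb].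
      destruct (A_above (mx b e1)) as [a [Ha Hl]]. exists a. split; auto. split.
      - eapply le_lt_trans; [apply mx_ge2| exact Hl].
      - intros y Hy. eapply trans; [apply Hb; exact Hy|]. eapply le_lt_trans; [apply mx_ge1| exact Hl]. }
    destruct (epsilon_spec (inhabits t0) _ Ex) as [S1 [S2 S3]].
    split; [exact S1|split; [exact S2| intros y Hy; apply (S3 y Hy)]]. }
  assert (Gam_mono : forall x y, lt y x -> lt (Gam y) (Gam x)).
  { intros x y Hy. eapply trans; [apply (HB (Gam y))| apply Gam_spec; auto]. }
  assert (Gam_le : forall x y, le y x -> le (Gam y) (Gam x)).
  { intros x y [Hy|Hy]; [left; auto| subst; apply le_refl]. }
  destruct (fam_bound (seg rho) Gam (small_seg rho)) as [bg Hbg].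
  destruct (sup_ex (fun z => exists x, lt x rho /\ Gam x = z)) as [e [He1' He2']].
  { exists bg. intros z [x [Hx E]]. subst. left; apply Hbg; auto. }
  assert (HGe : forall x, lt x rho -> lt (Gam x) e).
  { intros x Hx. destruct (Hlim x Hx) as [x' [h1 h2]]. eapply lt_le_trans; [apply Gam_mono; exact h1|].
    apply He1'. eauto. }
  assert (Hbelow : forall y, lt y e -> exists x, lt x rho /\ lt y (Gam x)).
  { intros y Hy. apply NNPP. intros Hn.
    assert (Hub : forall z, (exists x, lt x rho /\ Gam x = z) -> le z y).
    { intros z [x [Hx E]]. subst. apply not_lt_le. intros h'. apply Hn. eauto. }
    apply (le_not_lt _ _ (He2' y Hub) Hy). }
  destruct Hrne as [x0 Hx0].
  assert (Le : L e).
  { split.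
    - destruct (HAunb e) as [a [Ha ha]]. eauto.
    - intros g Hg. destruct (Hbelow g Hg) as [x [Hx Hgx]]. exists (Gam x). split; [apply Gam_spec|]. auto. }
  assert (LLe : LL e).
  { split; auto. left. eapply trans; [apply (Gam_spec x0)| apply HGe; auto]. }
  exists e. split; [exact Le|]. split; [|split].
  - intros g Hg.
    destruct (choice_on t0 (U e) (fun E x => lt x rho /\ lt (g E) (Gam x)) (fun E HE => Hbelow (g E) (Hg E HE))) as [idx Hidx].
    destruct (Big e LLe idx (fun E HE => proj1 (Hidx E HE))) as [xm [Hxm Hxm2]].
    exists (Gam xm). split; [apply HGe; auto|]. intros E HE. left.
    eapply lt_le_trans; [apply (proj2 (Hidx E HE))| apply Gam_le; apply Hxm2; auto].
  - exists (Gam x0). apply HGe; auto.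
  - intros s Hs. destruct (Hbelow s Hs) as [x [Hx Hsx]]. destruct (Hlim x Hx) as [x' [h1 h2]].
    eapply trans; [apply (HB (Gam x)); left; exact Hsx|]. eapply trans; [apply Gam_spec; exact h1| apply HGe; auto].
Qed.

Lemma F2 (h : T -> T) : exists e, L e /\ Good e /\ (exists x, lt x e) /\ forall s, lt s e -> lt (h s) e.
Proof.
  destruct (classic (exists e1, L e1 /\ Inf (U e1))) as [[e1 [He1 HI]]|Hn].
  - apply (F2_inf e1 He1 HI h).
  - destruct (omega_closure h t0) as [e [He [Ht Hcl]]]. exists e. split; auto. split; [|split; eauto].
    apply good_fin; eauto.
Qed.

Lemma main_thread : exists D, thread lt Cs D.
Proof. apply thread_ex. apply F3. apply F2. Qed.
End Ord.

Theorem corollary2p5 (T : Type) (lt : T -> T -> Prop) (K : Type)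
  (Cs : T -> (T -> Prop) -> Prop) (A : T -> Prop) :
  regular_uncountable_cardinal lt ->
  card_lt K T ->
  coherent_seq lt K Cs ->
  (forall g, exists a, A a /\ le lt g a) ->
  (forall alpha, A alpha ->
     exists C, Cs alpha C /\ (forall b, A b -> lt b alpha -> C b)) ->
  exists D, thread lt Cs D.
Proof.
  intros HR HK HC HAunb HAC.
  destruct (classic (inhabited T)) as [[t0]|Hn].
  - exact (main_thread T lt (proj1 HR) K Cs A HR HK HC HAunb HAC t0).
  - exists (fun _ => False). split; [split|].
    + intros g. exfalso; apply Hn; constructor; exact g.
    + intros b. exfalso; apply Hn; constructor; exact b.
    + intros a. exfalso; apply Hn; constructor; exact a.
Qed.
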